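(* Let $n\ge2$ and let $x\in\overline{L_n}$ be an ultrafilter that is not irreducible in $\beta\mathbb{N}$. Then there exist $i,j<n$ and ultrafilters $x_i\in\overline{L_i}$, $x_j\in\overline{L_j}$ such that $x=x_ix_j$.
   Context: $\mathbb{N}=\{1,2,3,\dots\}$; $\beta\mathbb{N}$ is the set of ultrafilters on $\mathbb{N}$ (Stone–Čech compactification, naturals identified with principal ultrafilters), with multiplication: $A\in xy$ iff $\{n:A/n\in y\}\in x$, $A/n=\{m:mn\in A\}$. For $A\subseteq\mathbb{N}$, $\overline{A}=\{x\in\beta\mathbb{N}:A\in x\}$. $P$ is the set of primes, $L_0=\{1\}$, $L_n=\{a_1\cdots a_n:a_i\in P\}$. An element $p\in\beta\mathbb{N}$ is irreducible if it cannot be written as $p=xy$ with $x,y\in\beta\mathbb{N}\setminus\{1\}$. *)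

(* Defs.v *)
(* Ultrafilters on N = {1,2,3,...} are represented as
   collections of subsets of nat (predicates nat -> Prop) containing the set
   of positive naturals. *)
From mathcomp Require Import all_boot.
Set Implicit Arguments. Unset Strict Implicit. Unset Printing Implicit Defensive.

Definition nset := nat -> Prop.
Definition UF := nset -> Prop.

Definition Npos : nset := fun m => 0 < m.

Definition is_ultrafilter (x : UF) : Prop :=
  [/\ x Npos,
      ~ x (fun _ => False),
      (forall A B : nset, x A -> (forall m, A m -> B m) -> x B),
      (forall A B : nset, x A -> x B -> x (fun m => A m /\ B m)) &
      (forall A : nset, x A \/ x (fun m => ~ A m))].

Definition principal (k : nat) : UF := fun A => A k.

Definition divset (A : nset) (n : nat) : nset := fun m => A (m * n).

Definition uf_mul (x y : UF) : UF :=
  fun A => x (fun n => y (divset A n)).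

Definition irreducible (p : UF) : Prop :=
  ~ exists x y : UF, [/\ is_ultrafilter x, is_ultrafilter y,
                        x <> principal 1, y <> principal 1 & p = uf_mul x y].

Definition L (n : nat) : nset :=
  fun m => exists s : seq nat, [/\ size s = n, all prime s & \prod_(p <- s) p = m].

(* Main.v *)
Require Import Defs.
From mathcomp Require Import all_boot.
From mathcomp Require Import zify.
From Stdlib Require Import Classical FunctionalExtensionality PropExtensionality.
Set Implicit Arguments. Unset Strict Implicit.

Lemma prime_in p t : prime p -> all prime t -> p %| \prod_(q <- t) q -> p \in t.
Proof.
move=> pp; elim: t => [|q t IH] /=.
  by rewrite big_nil Euclid_dvd1.
move=> /andP[pq at_]; rewrite big_cons Euclid_dvdM // => /orP[H|H].
  by rewrite in_cons -(dvdn_prime2 pp pq) H.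
by rewrite in_cons IH ?orbT.
Qed.

Lemma L_uniq_seq s t : all prime s -> all prime t ->
  \prod_(p <- s) p = \prod_(p <- t) p -> size s = size t.
Proof.
elim: s t => [|p s IH] t.
  case: t => [|q t] //= _ /andP[pq _]; rewrite big_nil big_cons => /esym/eqP.
  by rewrite muln_eq1 => /andP[/eqP q1 _]; move: pq; rewrite q1.
move=> /= /andP[pp ps] pt E.
have pin : p \in t.
  apply: prime_in => //; rewrite -E big_cons; exact: dvdn_mulr.
have Pt := perm_to_rem pin.
rewrite (perm_big _ Pt) /= !big_cons in E.
have E' : \prod_(q <- s) q = \prod_(q <- rem p t) q.
  by move/eqP: E; rewrite eqn_pmul2l ?prime_gt0 // => /eqP.
have art : all prime (rem p t).
  apply/allP => y /mem_rem yt; exact: (allP pt).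
rewrite (IH (rem p t) ps art E') size_rem // prednK //.
by move: pin; clear; case: t.
Qed.

Lemma L_unique i j m : L i m -> L j m -> i = j.
Proof.
move=> [s [<- ps <-]] [t [<- pt E]]; exact: L_uniq_seq.
Qed.

Lemma L_pos k m : L k m -> 0 < m.
Proof.
move=> [s [_ ps <-]]; elim: s ps => [|p s IH] /=; first by rewrite big_nil.
by move=> /andP[pp ps]; rewrite big_cons muln_gt0 prime_gt0 // IH.
Qed.

Lemma L_cat i j a b : L i a -> L j b -> L (i + j) (a * b).
Proof.
move=> [s [<- ps <-]] [t [<- pt <-]]; exists (s ++ t).
by rewrite size_cat all_cat ps pt big_cat.
Qed.

Lemma L_ex m : 0 < m -> exists k, L k m.
Proof.
elim: m {-2}m (leqnn m) => [|N IH] m Hm m0.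
  by move: Hm m0; case: m.
case: (ltnP 1 m) => m1; last first.
  have -> : m = 1 by lia.
  by exists 0, [::]; rewrite big_nil.
have pp := pdiv_prime m1.
have Em : m = pdiv m * (m %/ pdiv m) by rewrite mulnC divnK // pdiv_dvd.
have q0 : 0 < m %/ pdiv m by rewrite divn_gt0 ?pdiv_gt0 // pdiv_leq.
have qlt : m %/ pdiv m < m by rewrite ltn_Pdiv // prime_gt1.
have [k Hk] := IH (m %/ pdiv m) ltac:(lia) q0.
exists (1 + k); rewrite Em; apply: L_cat => //.
by exists [:: pdiv m]; rewrite /= big_seq1 pp.
Qed.

Lemma L_split k m a : L k (m * a) ->
  exists i j, [/\ L i m, L j a & i + j = k].
Proof.
move=> H; have := L_pos H; rewrite muln_gt0 => /andP[m0 a0].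
have [i Hi] := L_ex m0; have [j Hj] := L_ex a0.
exists i, j; split => //; apply: L_unique (L_cat Hi Hj) H.
Qed.

Lemma L0 m : L 0 m -> m = 1.
Proof. by move=> [[|? ?] [//= _ _ <-]]; rewrite big_nil. Qed.

Lemma uf_nonempty x B : is_ultrafilter x -> x B -> exists m, B m.
Proof.
move=> [_ Hf Hm _ _] HB; apply: NNPP => N; apply: Hf; apply: (Hm B _ HB); move=> m Bm; exact: N (ex_intro _ m Bm).
Qed.

Lemma uf_principal1 z : is_ultrafilter z -> z (L 0) -> z = principal 1.
Proof.
move=> Hz H0; apply: functional_extensionality => A.
apply: propositional_extensionality; rewrite /principal; split.
  move=> HA; case: (Hz) => [_ _ Hm Hi _].
  have [m [Am Lm]] := uf_nonempty Hz (Hi _ _ HA H0).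
  by rewrite -(L0 Lm).
move=> A1; case: Hz => [_ _ Hm _ _]; apply: (Hm _ _ H0) => m /L0 ->; exact A1.
Qed.

Unset Implicit Arguments.

Theorem corollary2p12 (n : nat) (x : UF) :
  2 <= n -> is_ultrafilter x -> x (L n) -> ~ irreducible x ->
  exists (i j : nat) (xi xj : UF),
    i < n /\ j < n /\ is_ultrafilter xi /\ is_ultrafilter xj /\
    xi (L i) /\ xj (L j) /\ x = uf_mul xi xj.
Proof.
move=> n2 Hx HL Hirr.
have [y [z [Hy Hz y1 z1 Exyz]]] := NNPP _ Hirr.
subst x.
have [a Ha] := uf_nonempty Hy HL.
have [m0 Hm0] := uf_nonempty Hz Ha.
have [i0 [j0 [Li0 Lj0 Eij]]] := L_split Hm0.
have HzL : z (L i0).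
  case: Hz => [_ _ Hm _ _]; apply: (Hm _ _ Ha) => m Hm'.
  have [i [j [Li Lj E]]] := L_split Hm'.
  have ej := L_unique Lj Lj0.
  have -> : i0 = i by lia.
  exact: Li.
have HyL : y (L j0).
  case: (Hy) => [_ _ Hm _ _]; apply: (Hm _ _ HL) => a' Ha'.
  have Hz' := Hz; case: Hz' => [_ _ _ Hi _].
  have [m [Hm1 Hm2]] := uf_nonempty Hz (Hi _ _ Ha' HzL).
  have [i [j [Li Lj E]]] := L_split Hm1.
  have ei := L_unique Li Hm2.
  have -> : j0 = j by lia.
  exact: Lj.
have i00 : i0 != 0.
  apply/eqP => E; subst i0; exact: z1 (uf_principal1 Hz HzL).
have j00 : j0 != 0.
  apply/eqP => E; subst j0; exact: y1 (uf_principal1 Hy HyL).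
exists j0, i0, y, z; do 6 (split; first (done || lia)); done.
Qed.
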